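(* Let $k\ge 0$ and $l\ge 1$ be integers such that the $k$th and $(k+l)$th Hopf bifurcations are nondegenerate. Then $\mu_k(lT^k_0+1)=\mu_{k+l}$ and $\frac{T^k_0}{lT^k_0+1}=T^{k+l}_0$. Moreover, near the bifurcation points the Cooke transform $C_l$ maps the $k$th Hopf branch into the $(k+l)$th Hopf branch. That is, for all sufficiently small $\eta>0$ there exists $\eta'\in(0,\eta_{k+l})$ such that $$C_l\big(\mu_k+\delta_k\eta,\;T^k_\eta,\;p^k_\eta\big)=\big(\mu_{k+l}+\delta_{k+l}\eta',\;T^{k+l}_{\eta'},\;p^{k+l}_{\eta'}\big),$$ where the periodic solutions are identified up to a time translation.
   Context: Consider the scalar delay differential equation (1) $x'(t)=-\mu f(x(t-1))$, with real parameter $\mu$ and phase space $C([-1,0],\mathbb R)$. Here $f:\mathbb R\to\mathbb R$ is $C^3$ with $f(0)=0$ and $f'(0)=1$, so that $f(\xi)=\xi+B\xi^2+C\xi^3+o(\xi^3)$ with $B=f''(0)/2$ and $C=f'''(0)/6$. For $k\in\mathbb Z$ let $\mu_k=\frac{(4k+1)\pi}{2}$ and $H(k)=\frac{22(4k+1)\pi-8}{15(4k+1)\pi}$. The $k$th Hopf bifurcation (at $\mu_k$) is supercritical if $C<H(k)B^2$ and subcritical if $C>H(k)B^2$; it is called nondegenerate if $C\ne H(k)B^2$. Supercritical means the bifurcating small periodic orbits are stable within the center manifold; subcritical means they are unstable there. Hopf branch notation, for $k\ge0$ with a nondegenerate $k$th bifurcation: put $\delta_k=1$ if it is supercritical and $\delta_k=-1$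 if it is subcritical. There are $\eta_k>0$ and a family of nonconstant periodic solutions $p^k_\eta$, $\eta\in(0,\eta_k)$, of (1) with parameter $\mu=\mu_k+\delta_k\eta$. These bifurcate from $0$ at $\mu_k$ (amplitude $\to0$ as $\eta\to0$), and they are locally unique up to time translation. $T^k_\eta$ denotes the minimal period of $p^k_\eta$, and $T^k_\eta\to T^k_0:=\frac{4}{4k+1}$ as $\eta\to0$. Cooke transform: for $l\in\mathbb N$, $C_l(\mu_*,T,p)=\big(\mu_*(lT+1),\,\frac{T}{lT+1},\,t\mapsto p((lT+1)t)\big)$, where $p$ is a periodic solution of (1) with parameter $\mu_*>0$ and period $T$. *)

(* Defs.v *)
From Stdlib Require Import Reals Lra.
Open Scope R_scope.

Definition C3_with (f f1 f2 f3 : R -> R) : Prop :=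
  (forall x, derivable_pt_lim f x (f1 x)) /\
  (forall x, derivable_pt_lim f1 x (f2 x)) /\
  (forall x, derivable_pt_lim f2 x (f3 x)) /\
  continuity f3.

Definition mu_ (k : nat) : R := (4 * INR k + 1) * PI / 2.

Definition H_ (k : nat) : R :=
  (22 * (4 * INR k + 1) * PI - 8) / (15 * (4 * INR k + 1) * PI).

Definition T0_ (k : nat) : R := 4 / (4 * INR k + 1).

(* B = f''(0)/2, C = f'''(0)/6 *)
Definition nondegenerate (B C : R) (k : nat) : Prop := C <> H_ k * B ^ 2.
Definition supercritical (B C : R) (k : nat) : Prop := C < H_ k * B ^ 2.
Definition subcritical (B C : R) (k : nat) : Prop := C > H_ k * B ^ 2.

Definition delta_spec (B C : R) (k : nat) (d : R) : Prop :=
  (supercritical B C k /\ d = 1) \/ (subcritical B C k /\ d = -1).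

Definition is_solution (f : R -> R) (mu : R) (x : R -> R) : Prop :=
  forall t, derivable_pt_lim x t (- mu * f (x (t - 1))).

Definition is_period (x : R -> R) (T : R) : Prop :=
  forall t, x (t + T) = x t.

Definition minimal_period (x : R -> R) (T : R) : Prop :=
  0 < T /\ is_period x T /\ (forall S, 0 < S < T -> ~ is_period x S).

Definition nonconstant (x : R -> R) : Prop := exists t s, x t <> x s.

Definition periodic_solution (f : R -> R) (mu T : R) (x : R -> R) : Prop :=
  is_solution f mu x /\ nonconstant x /\ minimal_period x T.

Definition time_translate (x y : R -> R) : Prop :=
  exists s, forall t, y t = x (t + s).

(* The k-th Hopf branch: eta0 = eta_k, p eta = p^k_eta, T eta = T^k_eta,
   parameter mu_k + d * eta with d = delta_k. *)
Definition hopf_branch (f : R -> R) (k : nat) (d eta0 : R)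
    (p : R -> R -> R) (T : R -> R) : Prop :=
  0 < eta0 /\
  (forall eta, 0 < eta < eta0 ->
      periodic_solution f (mu_ k + d * eta) (T eta) (p eta)) /\
  (forall eps, 0 < eps -> exists e, 0 < e /\
      forall eta, 0 < eta < eta0 -> eta < e -> forall t, Rabs (p eta t) < eps) /\
  (forall eps, 0 < eps -> exists e, 0 < e /\
      forall eta, 0 < eta < eta0 -> eta < e -> Rabs (T eta - T0_ k) < eps) /\
  (exists eps, 0 < eps /\
      forall mu S x, Rabs (mu - mu_ k) < eps -> Rabs (S - T0_ k) < eps ->
        (forall t, Rabs (x t) < eps) -> periodic_solution f mu S x ->
        exists eta, 0 < eta < eta0 /\ mu = mu_ k + d * eta /\ S = T eta /\
                    time_translate (p eta) x).

Definition cooke (l : nat) (mu T : R) (p : R -> R) : R * R * (R -> R) :=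
  (mu * (INR l * T + 1), T / (INR l * T + 1), fun t => p ((INR l * T + 1) * t)).

(* Main.v *)
Require Import Defs.
From Stdlib Require Import Reals.
From Stdlib Require Import Lra Psatz.
Open Scope R_scope.

Lemma period_iter (p : R -> R) (T : R) (n : nat) :
  is_period p T -> forall x, p (x + INR n * T) = p x.
Proof.
  intros HP. induction n as [|n IH]; intros x.
  - simpl. f_equal. ring.
  - rewrite S_INR. replace (x + (INR n + 1) * T) with ((x + INR n * T) + T) by ring.
    rewrite HP. apply IH.
Qed.

Lemma cooke_periodic (f : R -> R) (mu T L : R) (n : nat) (p : R -> R) :
  L = INR n -> periodic_solution f mu T p ->
  periodic_solution f (mu * (L * T + 1)) (T / (L * T + 1))
    (fun t => p ((L * T + 1) * t)).
Proof.
  intros HL [Hs [[t0 [s0 Hnc]] [HT [HP Hmin]]]].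
  assert (HL0 : 0 <= L) by (subst; apply pos_INR).
  set (c := L * T + 1).
  assert (Hc : 0 < c) by (unfold c; nra).
  split; [|split; [|split; [|split]]].
  - intros t.
    change (fun t0 : R => p (c * t0)) with (comp p (fun t0 => c * t0)).
    replace (- (mu * c) * f (p (c * (t - 1))))
      with ((- mu * f (p (c * t - 1))) * c).
    + apply derivable_pt_lim_comp.
      * change (fun t0 : R => c * t0) with (mult_real_fct c id).
        pose proof (derivable_pt_lim_scal id c t 1 (derivable_pt_lim_id t)) as Hd.
        rewrite Rmult_1_r in Hd. exact Hd.
      * apply Hs.
    + assert (E : p (c * t - 1) = p (c * (t - 1))).
      { replace (c * t - 1) with (c * (t - 1) + INR n * T) by (unfold c; subst; ring).
        apply period_iter; exact HP. }
      rewrite E. ring.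
  - exists (t0 / c), (s0 / c). simpl.
    replace (c * (t0 / c)) with t0 by (field; lra).
    replace (c * (s0 / c)) with s0 by (field; lra). exact Hnc.
  - apply Rdiv_lt_0_compat; lra.
  - intros t. simpl.
    replace (c * (t + T / c)) with (c * t + T) by (field; lra). apply HP.
  - intros S [HS1 HS2] HPS. apply (Hmin (c * S)).
    + split; [nra|]. 
      assert (S * c < T / c * c) by nra.
      replace (T / c * c) with T in H by (field; lra). lra.
    + intros x. specialize (HPS (x / c)). simpl in HPS.
      replace (c * (x / c + S)) with (x + c * S) in HPS by (field; lra).
      replace (c * (x / c)) with x in HPS by (field; lra). exact HPS.
Qed.

Lemma mu_bound (M L T T0 d eta eps : R) :
  0 < M -> 0 <= L -> 0 < T -> T0 <= 4 -> (d = 1 \/ d = -1) -> 0 < eta ->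
  Rabs (T - T0) < 1 -> Rabs (T - T0) * (M * L + 1) < eps / 2 ->
  eta * (5 * L + 1) < eps / 2 ->
  Rabs ((M + d * eta) * (L * T + 1) - M * (L * T0 + 1)) < eps.
Proof.
  intros HM HL HT HT0 Hd He H1 H2 H3.
  replace ((M + d * eta) * (L * T + 1) - M * (L * T0 + 1))
    with ((M * L) * (T - T0) + d * eta * (L * T + 1)) by ring.
  eapply Rle_lt_trans; [apply Rabs_triang|].
  rewrite !Rabs_mult.
  rewrite (Rabs_right M) by lra. rewrite (Rabs_right L) by lra.
  rewrite (Rabs_right eta) by lra.
  rewrite (Rabs_right (L * T + 1)) by nra.
  assert (Rabs d = 1) by (destruct Hd; subst; unfold Rabs; destruct Rcase_abs; lra).
  rewrite H.
  assert (T < 5) by (apply Rabs_def2 in H1; lra).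
  assert (0 <= Rabs (T - T0)) by apply Rabs_pos.
  assert (M * L * Rabs (T - T0) <= Rabs (T - T0) * (M * L + 1)) by nra.
  assert (eta * (L * T + 1) <= eta * (5 * L + 1)) by (apply Rmult_le_compat_l; nra).
  lra.
Qed.

Lemma per_bound (L T T0 : R) : 0 <= L -> 0 < T -> 0 < T0 ->
  Rabs (T / (L * T + 1) - T0 / (L * T0 + 1)) <= Rabs (T - T0).
Proof.
  intros HL HT HT0.
  assert (B1 : 0 <= L * T) by (apply Rmult_le_pos; lra).
  assert (B2 : 0 <= L * T0) by (apply Rmult_le_pos; lra).
  assert (A1 : 0 < L * T + 1) by nra.
  assert (A2 : 0 < L * T0 + 1) by nra.
  replace (T / (L * T + 1) - T0 / (L * T0 + 1))
    with ((T - T0) * / ((L * T + 1) * (L * T0 + 1))) by (field; lra).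
  rewrite Rabs_mult.
  assert (0 < (L * T + 1) * (L * T0 + 1)) by (apply Rmult_lt_0_compat; lra).
  rewrite (Rabs_right (/ _)) by (left; apply Rinv_0_lt_compat; lra).
  assert (/ ((L * T + 1) * (L * T0 + 1)) <= 1).
  { rewrite <- Rinv_1. apply Rinv_le_contravar; [lra|]. nra. }
  assert (0 <= Rabs (T - T0)) by apply Rabs_pos. nra.
Qed.

Theorem proposition1
  (f f1 f2 f3 : R -> R)
  (Hf : C3_with f f1 f2 f3) (Hf0 : f 0 = 0) (Hf10 : f1 0 = 1)
  (k l : nat) (Hl : (1 <= l)%nat)
  (Hk : nondegenerate (f2 0 / 2) (f3 0 / 6) k)
  (Hkl : nondegenerate (f2 0 / 2) (f3 0 / 6) (k + l))
  (dk dkl etak etakl : R) (pk pkl : R -> R -> R) (Tk Tkl : R -> R)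
  (Hdk : delta_spec (f2 0 / 2) (f3 0 / 6) k dk)
  (Hdkl : delta_spec (f2 0 / 2) (f3 0 / 6) (k + l) dkl)
  (Hbk : hopf_branch f k dk etak pk Tk)
  (Hbkl : hopf_branch f (k + l) dkl etakl pkl Tkl) :
  mu_ k * (INR l * T0_ k + 1) = mu_ (k + l) /\
  T0_ k / (INR l * T0_ k + 1) = T0_ (k + l) /\
  exists e, 0 < e /\
    forall eta, 0 < eta < etak -> eta < e ->
      exists eta', 0 < eta' < etakl /\
        let '(m, P, q) := cooke l (mu_ k + dk * eta) (Tk eta) (pk eta) in
        m = mu_ (k + l) + dkl * eta' /\
        P = Tkl eta' /\
        time_translate (pkl eta') q.
Proof.
  assert (Hk0 : 0 <= INR k) by apply pos_INR.
  assert (Hl0 : 0 <= INR l) by apply pos_INR.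
  assert (HPI : 0 < PI) by apply PI_RGT_0.
  assert (E1 : mu_ k * (INR l * T0_ k + 1) = mu_ (k + l)).
  { unfold mu_, T0_. rewrite plus_INR. field. lra. }
  assert (E2 : T0_ k / (INR l * T0_ k + 1) = T0_ (k + l)).
  { unfold T0_. rewrite plus_INR. field. lra. }
  split; [exact E1|]. split; [exact E2|].
  destruct Hbk as [Hek [Hsol [Hamp [HTc _]]]].
  destruct Hbkl as [_ [_ [_ [_ [eps0 [Heps0 Huniq]]]]]].
  set (M := mu_ k). set (L := INR l).
  assert (HM : 0 < M) by (unfold M, mu_; nra).
  assert (HT0 : 0 < T0_ k <= 4).
  { unfold T0_. split; [apply Rdiv_lt_0_compat; lra|].
    apply (Rmult_le_reg_r (4 * INR k + 1)); [lra|].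
    unfold Rdiv. rewrite Rmult_assoc, Rinv_l by lra. nra. }
  destruct (Hamp eps0 Heps0) as [e1 [He1 Ham]].
  set (del := Rmin 1 (Rmin eps0 (eps0 / 2 / (M * L + 1)))).
  assert (Hdel : 0 < del).
  { unfold del. repeat apply Rmin_pos; try lra.
    apply Rdiv_lt_0_compat; [lra|]. unfold L. nra. }
  destruct (HTc del Hdel) as [e2 [He2 HTb]].
  set (e3 := eps0 / 2 / (5 * L + 1)).
  assert (He3 : 0 < e3) by (unfold e3; apply Rdiv_lt_0_compat; unfold L; lra).
  exists (Rmin e1 (Rmin e2 e3)). split.
  { repeat apply Rmin_pos; lra. }
  intros eta Heta Hlt.
  assert (Hlt1 : eta < e1) by (eapply Rlt_le_trans; [exact Hlt|apply Rmin_l]).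
  assert (Hlt2 : eta < e2).
  { eapply Rlt_le_trans; [exact Hlt|]. eapply Rle_trans; [apply Rmin_r|apply Rmin_l]. }
  assert (Hlt3 : eta < e3).
  { eapply Rlt_le_trans; [exact Hlt|]. eapply Rle_trans; [apply Rmin_r|apply Rmin_r]. }
  pose proof (Hsol eta Heta) as Hps.
  assert (HTpos : 0 < Tk eta) by (destruct Hps as [_ [_ [H _]]]; exact H).
  pose proof (cooke_periodic f (mu_ k + dk * eta) (Tk eta) L l (pk eta) eq_refl Hps) as Hq.
  specialize (HTb eta Heta Hlt2).
  assert (Hd1 : del <= 1) by apply Rmin_l.
  assert (Hd2 : del <= eps0) by (eapply Rle_trans; [apply Rmin_r|apply Rmin_l]).
  assert (Hd3 : del <= eps0 / 2 / (M * L + 1))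
    by (eapply Rle_trans; [apply Rmin_r|apply Rmin_r]).
  assert (HML : 0 < M * L + 1) by (unfold L; nra).
  assert (Hdk1 : dk = 1 \/ dk = -1) by (destruct Hdk as [[_ H]|[_ H]]; auto).
  destruct (Huniq ((mu_ k + dk * eta) * (L * Tk eta + 1)) (Tk eta / (L * Tk eta + 1))
              (fun t => pk eta ((L * Tk eta + 1) * t))) as [eta' [Heta' [Hm [HS Htt]]]].
  - rewrite <- E1. fold M L.
    apply mu_bound; try lra; unfold L; try lra.
    + apply Rlt_le_trans with (del * (M * L + 1)).
      * apply Rmult_lt_compat_r; lra.
      * apply (Rmult_le_compat_r (M * L + 1)) in Hd3; [|lra].
        unfold Rdiv in Hd3 |- *. rewrite Rmult_assoc, Rinv_l in Hd3 by lra. lra.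
    + assert (eta * (5 * L + 1) < e3 * (5 * L + 1)) by (apply Rmult_lt_compat_r; unfold L; lra).
      unfold e3 in H. unfold Rdiv in H |- *. rewrite Rmult_assoc, Rinv_l in H by (unfold L; lra).
      unfold L in H. lra.
  - rewrite <- E2. fold L.
    eapply Rle_lt_trans; [apply per_bound; unfold L; lra|]. lra.
  - intros t. apply Ham; lra.
  - exact Hq.
  - exists eta'. split; [exact Heta'|]. unfold cooke. fold L. split; [exact Hm|]. split; [exact HS|].
    destruct Htt as [s Hs]. exists s. exact Hs.
Qed.
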